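(* Let $k\ge 1$ be an integer, let $(x_{i+1/2})_{i\in\mathbb{Z}}$ be an arbitrary mesh and let $(\bar v_i)_{i\in\mathbb{Z}}$ be an arbitrary real sequence. Let $v^\pm_{i+1/2}$ be the cell interface values of the $k$th order ENO reconstruction of $(\bar v_i)$. Then for every $i\in\mathbb{Z}$: if $\bar v_{i+1}-\bar v_i>0$ then $v^+_{i+1/2}-v^-_{i+1/2}\ge 0$; if $\bar v_{i+1}-\bar v_i<0$ then $v^+_{i+1/2}-v^-_{i+1/2}\le 0$; and if $\bar v_{i+1}-\bar v_i=0$ then $v^+_{i+1/2}-v^-_{i+1/2}=0$.
   Context: Mesh: a strictly increasing sequence $(x_{i+1/2})_{i\in\mathbb{Z}}$ of reals with $x_{i+1/2}\to\pm\infty$ as $i\to\pm\infty$; cells $I_i=[x_{i-1/2},x_{i+1/2})$ with lengths $\Delta x_i=x_{i+1/2}-x_{i-1/2}$. Given a real sequence $(\bar v_i)_{i\in\mathbb{Z}}$ (interpreted as cell averages), the divided differences are defined by $[\bar v_i]=\bar v_i$ and, for $i<j$, $[\bar v_i,\dots,\bar v_j]=\frac{[\bar v_{i+1},\dots,\bar v_j]-[\bar v_i,\dots,\bar v_{j-1}]}{x_{j+1/2}-x_{i-1/2}}$. The $k$th order ENO reconstruction: for each $i$, set $s_i^1=i$, and for $\ell=1,\dots,k-1$ set $s_i^{\ell+1}=s_i^\ell-1$ if $\bigl|[\bar v_{s_i^\ell-1},\dots,\bar v_{s_i^\ell+\ell-1}]\bigr|<\bigl|[\bar v_{s_i^\ell},\dots,\bar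 v_{s_i^\ell+\ell}]\bigr|$, and $s_i^{\ell+1}=s_i^\ell$ otherwise; put $s_i=s_i^k\in\{i-k+1,\dots,i\}$. Then $p_i$ is the unique polynomial of degree at most $k-1$ with $\frac{1}{\Delta x_j}\int_{I_j}p_i(x)\,dx=\bar v_j$ for $j=s_i,\dots,s_i+k-1$. The cell interface values are $v^-_{i+1/2}=p_i(x_{i+1/2})$ and $v^+_{i+1/2}=p_{i+1}(x_{i+1/2})$. *)

(* Defs.v *)
(* The mesh values x_{i+1/2} are encoded as xh i, so that
   cell I_i = [xh (i-1), xh i) and Delta x_i = xh i - xh (i-1). *)
From HB Require Import structures.
From mathcomp Require Import all_boot all_order all_algebra.
Set Implicit Arguments. Unset Strict Implicit. Unset Printing Implicit Defensive.
Import Order.TTheory GRing.Theory Num.Theory.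
Local Open Scope ring_scope.

Section ENO.
Variable R : realFieldType.

Definition is_mesh (xh : int -> R) : Prop :=
  (forall i : int, xh i < xh (i + 1)) /\
  (forall M : R, exists N : int, forall i : int, N <= i -> M < xh i) /\
  (forall M : R, exists N : int, forall i : int, i <= N -> xh i < M).

Definition cell_len (xh : int -> R) (i : int) : R := xh i - xh (i - 1).

Definition prim (p : {poly R}) : {poly R} :=
  \poly_(j < (size p).+1) (if j is j'.+1 then p`_j' / j%:R else 0).

Definition pint (p : {poly R}) (a b : R) : R := (prim p).[b] - (prim p).[a].

Definition cell_avg (xh : int -> R) (p : {poly R}) (j : int) : R :=
  pint p (xh (j - 1)) (xh j) / cell_len xh j.

(* dd xh v n i = [v_i, ..., v_{i+n}]  (divided differences) *)
Fixpoint dd (xh : int -> R) (v : int -> R) (n : nat) (i : int) : R :=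
  match n with
  | 0 => v i
  | n'.+1 => (dd xh v n' (i + 1) - dd xh v n' i) / (xh (i + Posz n'.+1) - xh (i - 1))
  end.

(* eno_st xh v i m = s_i^{m+1}; the step from s_i^l to s_i^{l+1} uses l = m+1. *)
Fixpoint eno_st (xh : int -> R) (v : int -> R) (i : int) (m : nat) : int :=
  match m with
  | 0 => i
  | m'.+1 => let s := eno_st xh v i m' in
             if `|dd xh v m'.+1 (s - 1)| < `|dd xh v m'.+1 s| then s - 1 else s
  end.

Definition eno_stencil (k : nat) (xh : int -> R) (v : int -> R) (i : int) : int :=
  eno_st xh v i k.-1.

Definition eno_poly_spec (k : nat) (xh : int -> R) (v : int -> R) (i : int)
    (p : {poly R}) : Prop :=
  (size p <= k)%N /\
  forall j : int, eno_stencil k xh v i <= j <= eno_stencil k xh v i + Posz k - 1 ->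
    cell_avg xh p j = v j.
End ENO.

(* Main.v *)
Require Import Defs.
From HB Require Import structures.
From mathcomp Require Import all_boot all_order all_algebra.
From mathcomp Require Import zify ring lra.
Import Order.TTheory GRing.Theory Num.Theory.
Local Open Scope ring_scope.

Section Interp.
Variable R : realFieldType.
Variable xh : int -> R.
Hypothesis inc : forall i : int, xh i < xh (i + 1).

Lemma xh_ltn (a : int) (n : nat) : xh a < xh (a + n.+1).
Proof.
elim: n => [|n IH]; first exact: inc.
apply: (lt_trans IH). have -> : a + n.+2 = (a + n.+1) + 1 by lia. exact: inc.
Qed.

Lemma xh_lt (a b : int) : a < b -> xh a < xh b.
Proof.
move=> hab. have -> : b = a + (absz (b - a - 1)%R).+1 by lia. exact: xh_ltn.
Qed.

Fixpoint DD (f : int -> R) (n : nat) (a : int) : R :=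
  match n with
  | 0 => f a
  | n'.+1 => (DD f n' (a + 1) - DD f n' a) / (xh (a + n'.+1) - xh a)
  end.

Fixpoint NL (f : int -> R) (n : nat) (a : int) : {poly R} :=
  match n with
  | 0 => (f a)%:P
  | n'.+1 => (xh (a + n'.+1) - xh a)^-1 *:
       (('X - (xh a)%:P) * NL f n' (a + 1) - ('X - (xh (a + n'.+1))%:P) * NL f n' a)
  end.

Lemma coefXsubCM (c : R) (Q : {poly R}) (j : nat) :
  (('X - c%:P) * Q)`_j.+1 = Q`_j - c * Q`_j.+1.
Proof. by rewrite mulrBl coefB coefXM coefCM. Qed.

Lemma size_NL f n a : (size (NL f n a) <= n.+1)%N.
Proof.
elim: n a => [|n IH] a /=; first exact: size_polyC_leq1.
apply/leq_sizeP => j hj.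
case: j hj => [//|j] hj.
have h1 := leq_sizeP _ _ (IH (a + 1)). have h0 := leq_sizeP _ _ (IH a).
rewrite coefZ coefB !coefXsubCM (h1 j) ?(h1 j.+1) ?(h0 j) ?(h0 j.+1); try lia.
by rewrite !mulr0 !subrr ?mulr0.
Qed.

Lemma lead_NL f n a : (NL f n a)`_n = DD f n a.
Proof.
elim: n a => [|n IH] a /=; first by rewrite coefC.
have h1 := leq_sizeP _ _ (size_NL f n (a + 1)). have h0 := leq_sizeP _ _ (size_NL f n a).
rewrite coefZ coefB !coefXsubCM !IH (h1 n.+1) ?(h0 n.+1) //.
by rewrite !mulr0 !subr0 mulrC.
Qed.

Lemma interp_NL f (n : nat) (a j : int) : a <= j <= a + n%:Z -> (NL f n a).[xh j] = f j.
Proof.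
elim: n a j => [|n IH] a j /=.
  move=> hj. have -> : j = a by lia. by rewrite hornerC.
move=> hj.
have hne : xh (a + n.+1) - xh a != 0.
  have := xh_ltn a n. by rewrite -subr_gt0 => /gt_eqF ->.
rewrite hornerZ hornerD hornerN !hornerM !hornerXsubC.
have [ja | jna] := eqVneq j a.
  subst j. rewrite subrr mul0r sub0r (IH a a); last by lia.
  by field.
have [jb | jnb] := eqVneq j (a + n.+1).
  rewrite jb subrr mul0r subr0 (IH (a+1)); last by lia.
  by field.
rewrite (IH (a+1)); last by lia.
rewrite (IH a); last by lia.
by field.
Qed.


Fixpoint om (x : int) (n : nat) : {poly R} :=
  match n with 0 => 1 | n'.+1 => om x n' * ('X - (xh (x + n'%:Z))%:P) end.

Lemma size_om x n : (size (om x n) <= n.+1)%N.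
Proof.
elim: n => [|n IH] /=; first by rewrite size_poly1.
have h := leq_sizeP _ _ IH.
apply/leq_sizeP => j hj. case: j hj => [//|j] hj.
rewrite mulrC coefXsubCM (h j) ?(h j.+1); try lia. by rewrite mulr0 subrr.
Qed.

Lemma lead_om x n : (om x n)`_n = 1.
Proof.
elim: n => [|n IH] /=; first by rewrite coefC.
have h := leq_sizeP _ _ (size_om x n).
by rewrite mulrC coefXsubCM IH (h n.+1) // mulr0 subr0.
Qed.

Lemma root_om (x : int) (n : nat) (j : int) : x <= j < x + n%:Z -> (om x n).[xh j] = 0.
Proof.
elim: n => [|n IH] hj /=; first by lia.
rewrite hornerM hornerXsubC.
have [e | ne] := eqVneq j (x + n%:Z); first by rewrite e subrr mulr0.
by rewrite IH ?mul0r //; lia.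
Qed.

Lemma uniq_poly (n : nat) (x : int) (E : {poly R}) : (size E <= n)%N ->
  (forall j : int, x <= j < x + n%:Z -> E.[xh j] = 0) -> E = 0.
Proof.
elim: n E => [|n IH] E hs hz.
  by apply/eqP; rewrite -size_poly_eq0; lia.
have : root E (xh (x + n%:Z)) by apply/eqP; apply: hz; lia.
case/factor_theorem => q hq.
have [q0 | qn0] := eqVneq q 0; first by rewrite hq q0 mul0r.
have hsq : (size q <= n)%N.
  move: hs; rewrite hq size_Mmonic ?monicXsubC // size_XsubC addn2 /=; apply.
suff q0' : q = 0 by rewrite hq q0' mul0r.
apply: (IH q hsq) => j hj.
have := hz j ltac:(lia). rewrite hq hornerM hornerXsubC => /eqP.
rewrite mulf_eq0 => /orP [/eqP //|].
have := xh_lt j (x + n%:Z) ltac:(lia). rewrite subr_eq0 => /lt_eqF -> //.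
Qed.

Lemma fact_poly (n : nat) (x : int) (D : {poly R}) : (size D <= n.+1)%N ->
  (forall j : int, x <= j < x + n%:Z -> D.[xh j] = 0) -> D = D`_n *: om x n.
Proof.
move=> hs hz. apply/eqP; rewrite -subr_eq0; apply/eqP.
apply: (@uniq_poly n x).
  apply/leq_sizeP => j hj.
  have h1 := leq_sizeP _ _ hs. have h2 := leq_sizeP _ _ (size_om x n).
  rewrite coefB coefZ.
  have [e | ne] := eqVneq j n; first by rewrite e lead_om mulr1 subrr.
  have hj' : (n < j)%N by lia.
  by rewrite (h1 j) // (h2 j) // mulr0 subrr.
move=> j hj. by rewrite hornerD hornerN hornerZ hz // root_om // mulr0 subrr.
Qed.

Fixpoint Wd (i x : int) (n : nat) : R :=
  match n with 0 => 1 | n'.+1 =>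
    Wd i x n' * (if x + n'%:Z == i then 1 else xh i - xh (x + n'%:Z)) end.

Lemma om_Wd (i x : int) (n : nat) : x + n%:Z <= i -> (om x n).[xh i] = Wd i x n.
Proof.
elim: n => [|n IH] hi /=; first by rewrite hornerC.
rewrite hornerM hornerXsubC IH; last by lia.
have -> : (x + n%:Z == i) = false by apply/eqP; lia.
done.
Qed.

Lemma deriv_om (i x : int) (n : nat) : x <= i < x + n%:Z -> (om x n)^`().[xh i] = Wd i x n.
Proof.
elim: n => [|n IH] hi /=; first by lia.
rewrite derivM derivXsubC mulr1 hornerD hornerM hornerXsubC.
have [e | ne] := eqVneq (x + n%:Z) i.
  by rewrite e subrr mulr0 add0r om_Wd ?e // mulr1.
rewrite IH; last by lia.
by rewrite root_om ?addr0 //; lia.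
Qed.

Definition sgz (z : int) : R := (-1) ^+ (absz z).

Lemma sgzS z : sgz (z + 1) = - sgz z.
Proof.
rewrite /sgz. case: z => n.
  have -> : Posz n + 1 = Posz n.+1 by lia.
  by rewrite exprS mulN1r.
case: n => [|n].
  have -> : Negz 0 + 1 = 0 by lia.
  by rewrite expr0 /= expr1 opprK.
have -> : (Negz n.+1 + 1) = Negz n by lia.
have -> : absz (Negz n.+1) = (absz (Negz n)).+1 by [].
by rewrite exprS mulN1r opprK.
Qed.

Lemma sgz_cases z : sgz z = 1 \/ sgz z = -1.
Proof. rewrite /sgz -signr_odd; case: (odd _); [right|left]; by rewrite ?expr1 ?expr0. Qed.

Lemma sgz0 : sgz 0 = 1.
Proof. by rewrite /sgz expr0. Qed.

Lemma WdS i x n : Wd i x n.+1 = Wd i x n * (if x + n%:Z == i then 1 else xh i - xh (x + n%:Z)).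
Proof. by []. Qed.

Lemma Wd_pos (i x : int) (n : nat) : x + n%:Z <= i -> 0 < Wd i x n.
Proof.
elim: n => [|n IH] hi /=; first by [].
have -> : (x + n%:Z == i) = false by apply/eqP; lia.
apply: mulr_gt0; first by apply: IH; lia.
rewrite subr_gt0; apply: xh_lt; lia.
Qed.

Lemma Wd_sign (i x : int) (n : nat) : x <= i < x + n%:Z -> 0 < sgz (x + n%:Z - 1 - i) * Wd i x n.
Proof.
elim: n => [|n IH] hi; first by lia.
rewrite WdS.
have [e | ne] := eqVneq (x + n%:Z) i.
  rewrite mulr1.
  have -> : x + n.+1%:Z - 1 - i = 0 by lia.
  rewrite sgz0 mul1r. apply: Wd_pos; lia.
have -> : x + n.+1%:Z - 1 - i = (x + n%:Z - 1 - i) + 1 by lia.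
rewrite sgzS.
have h1 := IH ltac:(lia).
have h2 : xh i < xh (x + n%:Z) by apply: xh_lt; lia.
have -> : - sgz (x + n%:Z - 1 - i) * (Wd i x n * (xh i - xh (x + n%:Z)))
  = (sgz (x + n%:Z - 1 - i) * Wd i x n) * (xh (x + n%:Z) - xh i) by ring.
by rewrite mulr_gt0 // subr_gt0.
Qed.


Lemma DDS f n a : DD f n.+1 a = (DD f n (a + 1) - DD f n a) / (xh (a + n.+1%:Z) - xh a).
Proof. by []. Qed.

Lemma exV (g : int -> R) : exists V : int -> R, forall j, V j - V (j - 1) = g j.
Proof.
exists (fun z => match z with
  | Posz n => \sum_(t < n) g (Posz t.+1)
  | Negz n => - \sum_(t < n.+1) g (- Posz t) end).
case=> n.
  case: n => [|n].
    have -> : Posz 0 - 1 = Negz 0 by [].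
    by rewrite big_ord0 big_ord1 /= sub0r opprK.
  have -> : Posz n.+1 - 1 = Posz n by lia.
  by rewrite big_ord_recr /= addrAC subrr add0r.
have -> : Negz n - 1 = Negz n.+1 by lia.
rewrite (big_ord_recr n.+1) /=.
have -> : - Posz n.+1 = Negz n by lia.
ring.
Qed.

Variable v : int -> R.

Lemma cl_pos j : 0 < cell_len xh j.
Proof. rewrite /cell_len subr_gt0; apply: xh_lt; lia. Qed.

Lemma ddS n a : dd xh v n.+1 a = (dd xh v n (a + 1) - dd xh v n a) / (xh (a + n.+1%:Z) - xh (a - 1)).
Proof. by []. Qed.

Lemma dd_DD V (hV : forall j, V j - V (j - 1) = v j * cell_len xh j) n a :
  dd xh v n a = DD V n.+1 (a - 1).
Proof.
elim: n a => [|n IH] a.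
  rewrite DDS /=. have -> : a - 1 + 1 = a by lia.
  rewrite hV /cell_len. have := cl_pos a. rewrite /cell_len => h.
  field. by apply: lt0r_neq0.
rewrite ddS DDS IH IH.
have -> : a + 1 - 1 = a - 1 + 1 by lia.
by have -> : a - 1 + n.+2%:Z = a + n.+1%:Z by lia.
Qed.

Lemma eno_stS i m : eno_st xh v i m.+1 =
  if `|dd xh v m.+1 (eno_st xh v i m - 1)| < `|dd xh v m.+1 (eno_st xh v i m)|
  then eno_st xh v i m - 1 else eno_st xh v i m.
Proof. by []. Qed.

Lemma eno_st0 i : eno_st xh v i 0 = i.
Proof. by []. Qed.

Lemma eno_bounds i m : i - m%:Z <= eno_st xh v i m <= i.
Proof.
elim: m => [|m IH]; first by rewrite eno_st0; lia.
rewrite eno_stS; case: ifP => _; lia.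
Qed.

Lemma eno_le i m : eno_st xh v i m <= eno_st xh v (i + 1) m.
Proof.
elim: m => [|m IH]; first by rewrite !eno_st0; lia.
rewrite !eno_stS.
set A := eno_st xh v i m; set B := eno_st xh v (i + 1) m.
have [e | ne] := eqVneq A B; first by rewrite e.
by case: ifP => _; case: ifP => _; lia.
Qed.

Lemma comb (s a b : R) : 0 <= s * a -> `|b| <= `|a| -> 0 <= s * (a + b).
Proof.
move=> ha hb. rewrite mulrDr.
have h1 : - (s * b) <= `|s| * `|a|.
  apply: le_trans (ler_norm _) _. rewrite normrN normrM. exact: ler_wpM2l.
have h2 : `|s| * `|a| = s * a by rewrite -normrM ger0_norm.
lra.
Qed.

Lemma sgz_norm z (c : R) : `|sgz z * c| = `|c|.
Proof. by case: (sgz_cases z) => ->; rewrite ?mul1r ?mulN1r ?normrN. Qed.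

Lemma Frec i m x : sgz (x + m.+1%:Z - i) * dd xh v m.+2 x =
  (sgz ((x + 1) + m%:Z - i) * dd xh v m.+1 (x + 1) + sgz (x + m%:Z - i) * dd xh v m.+1 x)
  / (xh (x + m.+2%:Z) - xh (x - 1)).
Proof.
rewrite ddS.
have -> : x + m.+1%:Z - i = (x + m%:Z - i) + 1 by lia.
have -> : x + 1 + m%:Z - i = (x + m%:Z - i) + 1 by lia.
rewrite sgzS.
have hh : xh (x + m.+2%:Z) - xh (x - 1) != 0.
  by apply: lt0r_neq0; rewrite subr_gt0; apply: xh_lt; lia.
by field.
Qed.

Lemma inv_eno (s : R) i (h0 : 0 <= s * dd xh v 1 i) m x :
  eno_st xh v i m <= x < eno_st xh v (i + 1) m ->
  0 <= s * (sgz (x + m%:Z - i) * dd xh v m.+1 x).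
Proof.
elim: m x => [|m IH] x.
  rewrite !eno_st0 => hx. have -> : x = i by lia.
  have -> : i + 0%:Z - i = 0 by lia.
  by rewrite sgz0 mul1r.
have hAB := eno_le i m.
have bA := eno_bounds i m. have bB := eno_bounds (i + 1) m.
rewrite !eno_stS.
set A := eno_st xh v i m; set B := eno_st xh v (i + 1) m.
move=> hx.
have hh : 0 < xh (x + m.+2%:Z) - xh (x - 1) by rewrite subr_gt0; apply: xh_lt; lia.
rewrite Frec mulrA.
suff : 0 <= s * (sgz (x + 1 + m%:Z - i) * dd xh v m.+1 (x + 1) + sgz (x + m%:Z - i) * dd xh v m.+1 x).
  move=> h; apply: divr_ge0 => //; exact: ltW.
have [e | ne] := eqVneq A B.
  by move: hx; rewrite e; case: ifP => _; lia.
have [xA | Ax] := ltP x A.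
  move: hx; case: ifP => cA; last by lia.
  move=> hx. have -> : x = A - 1 by lia.
  have -> : A - 1 + 1 = A by lia.
  apply: comb; first by apply: IH; lia.
  by rewrite !sgz_norm ltW.
have [xB | Bx] := ltP (x + 1) B.
  rewrite mulrDr; apply: addr_ge0; apply: IH; lia.
move: hx; case: ifP => cA; case: ifP => cB hx; try lia.
all: have -> : x = B - 1 by lia.
all: have -> : B - 1 + 1 = B by lia.
all: rewrite addrC; apply: comb; first by apply: IH; lia.
all: rewrite !sgz_norm; by rewrite real_leNgt ?cB ?realE ?normr_ge0.
Qed.


Lemma deriv_prim (q : {poly R}) : (prim q)^`() = q.
Proof.
apply/polyP => j. rewrite coef_deriv /prim coef_poly.
case: ifP => hj /=.
  rewrite -(mulr_natr (q`_j / _)) divfK //. by rewrite pnatr_eq0.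
by rewrite nth_default ?mul0rn // leqNgt -ltnS hj.
Qed.

Lemma size_prim (q : {poly R}) : (size (prim q) <= (size q).+1)%N.
Proof. exact: size_poly. Qed.

Lemma size_B (P Q : {poly R}) n : (size P <= n)%N -> (size Q <= n)%N -> (size (P - Q)%R <= n)%N.
Proof.
move=> /leq_sizeP h1 /leq_sizeP h2; apply/leq_sizeP => j hj.
by rewrite coefB h1 // h2 // subrr.
Qed.



Lemma recon V (hV : forall j, V j - V (j - 1) = v j * cell_len xh j) m (q : {poly R}) (s : int) :
  (size q <= m.+1)%N ->
  (forall j, s <= j <= s + Posz m.+1 - 1 -> cell_avg xh q j = v j) ->
  forall y, q.[y] = (NL V m.+1 (s - 1))^`().[y].
Proof.
move=> hs hav y.
set P := prim q. set c := P.[xh (s - 1)] - V (s - 1).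
have hc : forall r : nat, (r <= m.+1)%N -> P.[xh (s - 1 + r%:Z)] = V (s - 1 + r%:Z) + c.
  elim=> [|r IH] hr; first by rewrite addr0 /c; ring.
  have := hav (s - 1 + r.+1%:Z) ltac:(lia).
  rewrite /cell_avg /pint -/P.
  have -> : s - 1 + r.+1%:Z - 1 = s - 1 + r%:Z by lia.
  rewrite IH; last by lia.
  have hV' := hV (s - 1 + r.+1%:Z).
  rewrite (_ : s - 1 + r.+1%:Z - 1 = s - 1 + r%:Z) in hV'; last by lia.
  have hcl := cl_pos (s - 1 + r.+1%:Z).
  move=> h. have h2 : P.[xh (s - 1 + r.+1%:Z)] - (V (s - 1 + r%:Z) + c) =
     v (s - 1 + r.+1%:Z) * cell_len xh (s - 1 + r.+1%:Z).
    rewrite -h. field. exact: lt0r_neq0.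
  lra.
have hE : P - c%:P - NL V m.+1 (s - 1) = 0.
  apply: (@uniq_poly m.+2 (s - 1)).
    apply: size_B; last exact: size_NL.
    apply: size_B; last by apply: leq_trans (size_polyC_leq1 _) _.
    exact: leq_trans (size_prim q) _.
  move=> j hj.
  have -> : j = s - 1 + (absz (j - (s - 1))%R)%:Z by lia.
  rewrite !hornerD !hornerN hornerC hc; last by lia.
  rewrite interp_NL; last by lia.
  ring.
have -> : q = P^`() by rewrite deriv_prim.
have hP : P = NL V m.+1 (s - 1) + c%:P.
  by move/eqP: hE; rewrite subr_eq0 => /eqP <-; rewrite subrK.
rewrite hP.
by rewrite derivD derivC addr0.
Qed.

Lemma tele V (hV : forall j, V j - V (j - 1) = v j * cell_len xh j) (m : nat) (s : R) i
  (h0 : 0 <= s * dd xh v 1 i) (g : nat) :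
  eno_st xh v i m + g%:Z <= eno_st xh v (i + 1) m ->
  0 <= s * ((NL V m.+1 (eno_st xh v i m + g%:Z - 1))^`().[xh i] - (NL V m.+1 (eno_st xh v i m - 1))^`().[xh i]).
Proof.
set A := eno_st xh v i m; set B := eno_st xh v (i + 1) m.
have bA := eno_bounds i m. have bB := eno_bounds (i + 1) m.
elim: g => [|g IH] hg; first by rewrite addr0 subrr mulr0.
set x := A + g%:Z.
have -> : A + g.+1%:Z - 1 = x by rewrite /x; lia.
have hD := @fact_poly m.+1 x (NL V m.+1 x - NL V m.+1 (x - 1)).
have hD' : NL V m.+1 x - NL V m.+1 (x - 1) =
   (NL V m.+1 x - NL V m.+1 (x - 1))`_m.+1 *: om x m.+1.
  apply: hD; first by apply: size_B; apply: size_NL.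
  move=> j hj. rewrite hornerD hornerN !interp_NL ?subrr //; rewrite /x; lia.
have hsum : (NL V m.+1 x)^`().[xh i] - (NL V m.+1 (A - 1))^`().[xh i] =
  ((NL V m.+1 (x - 1))^`().[xh i] - (NL V m.+1 (A - 1))^`().[xh i]) +
  (NL V m.+1 x - NL V m.+1 (x - 1))^`().[xh i].
  rewrite derivB hornerD hornerN. ring.
rewrite hsum mulrDr; apply: addr_ge0.
  have -> : x - 1 = A + g%:Z - 1 by [].
  apply: IH; lia.
rewrite hD' derivZ hornerZ deriv_om; last by rewrite /x; lia.
rewrite coefB !lead_NL.
have hdd : DD V m.+1 x - DD V m.+1 (x - 1) =
    (xh (x - 1 + m.+2%:Z) - xh (x - 1)) * dd xh v m.+1 x.
  rewrite (@dd_DD V hV) (DDS V m.+1 (x - 1)).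
  have -> : x - 1 + 1 = x by lia.
  have hh : xh (x - 1 + m.+2%:Z) - xh (x - 1) != 0.
    by apply: lt0r_neq0; rewrite subr_gt0; apply: xh_lt; lia.
  by field.
rewrite hdd.
have hW := @Wd_sign i x m.+1 ltac:(rewrite /x; lia).
have hI := @inv_eno s i h0 m x ltac:(rewrite /x; lia).
rewrite (_ : x + m.+1%:Z - 1 - i = x + m%:Z - i) in hW; last by lia.
have hh : 0 < xh (x - 1 + m.+2%:Z) - xh (x - 1) by rewrite subr_gt0; apply: xh_lt; lia.
set h := xh (x - 1 + m.+2%:Z) - xh (x - 1) in hh *.
set sg := sgz (x + m%:Z - i) in hW hI.
set W := Wd i x m.+1 in hW *.
set d := dd xh v m.+1 x in hI *.
have -> : s * (h * d * W) = h * (sg * W) * (s * (sg * d)).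
  rewrite /sg; case: (sgz_cases (x + m%:Z - i)) => ->; ring.
apply: mulr_ge0; last exact: hI.
apply: mulr_ge0; exact: ltW.
Qed.

Lemma key (m : nat) (p : int -> {poly R})
  (hp : forall i : int, eno_poly_spec m.+1 xh v i (p i)) (s : R) (i : int) :
  0 <= s * dd xh v 1 i -> 0 <= s * ((p (i + 1)).[xh i] - (p i).[xh i]).
Proof.
move=> h0.
have [V hV] := exV (fun j => v j * cell_len xh j).
have [hs1 ha1] := hp (i + 1). have [hs0 ha0] := hp i.
rewrite (@recon V hV m _ _ hs1 ha1) (@recon V hV m _ _ hs0 ha0).
rewrite /eno_stencil /=.
have := @tele V hV m s i h0 (absz (eno_st xh v (i + 1) m - eno_st xh v i m)%R).
have hAB := eno_le i m.
have -> : eno_st xh v i m + (absz (eno_st xh v (i + 1) m - eno_st xh v i m)%R)%:Z - 1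
   = eno_st xh v (i + 1) m - 1 by lia.
move=> h; apply: h; lia.
Qed.

End Interp.

Theorem mainTheorem1 (R : realFieldType) (k : nat) (hk : (1 <= k)%N)
    (xh : int -> R) (hmesh : is_mesh xh) (v : int -> R)
    (p : int -> {poly R})
    (hp : forall i : int, eno_poly_spec k xh v i (p i)) :
  forall i : int,
    let vminus := (p i).[xh i] in
    let vplus := (p (i + 1)).[xh i] in
    (0 < v (i + 1) - v i -> 0 <= vplus - vminus) /\
    (v (i + 1) - v i < 0 -> vplus - vminus <= 0) /\
    (v (i + 1) - v i = 0 -> vplus - vminus = 0).
Proof.
move=> i vm vp. rewrite /vm /vp.
case: k hk hp => [//|m] _ hp.
have inc := hmesh.1.
have hk := @key R xh inc v m p hp.
have hd : dd xh v 1 i = (v (i + 1) - v i) / (xh (i + 1%:Z) - xh (i - 1)) by [].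
have hpos : 0 < xh (i + 1%:Z) - xh (i - 1) by rewrite subr_gt0; apply: (@xh_lt R xh inc); lia.
have h1 := hk 1 i. have h2 := hk (-1) i.
rewrite !mul1r in h1. rewrite !mulN1r oppr_ge0 in h2.
have hinv : 0 <= (xh (i + 1%:Z) - xh (i - 1))^-1 by rewrite invr_ge0; exact: ltW.
split; last split.
- move=> hv. apply: h1. rewrite hd. apply: mulr_ge0 => //; exact: ltW.
- move=> hv. rewrite -oppr_ge0. apply: h2. rewrite hd.
  apply: mulr_le0_ge0 => //; exact: ltW.
- move=> hv. apply/eqP; rewrite eq_le; apply/andP; split.
    rewrite -oppr_ge0. apply: h2. by rewrite hd hv mul0r.
  apply: h1. by rewrite hd hv mul0r.
Qed.
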